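(* Let $c>0$, $n\ge 2$, and let $\mathbb{R}^n_c=\{\mathbf{v}\in\mathbb{R}^n:\|\mathbf{v}\|<c\}$ be equipped with Möbius addition $\oplus$, Möbius scalar multiplication $\otimes$ and Möbius coaddition $\boxplus$ (defined in the context). Let $C,D\in\mathbb{R}^n_c$ be distinct and let $L_{CD}(t)=C\oplus\big((\ominus C\oplus D)\otimes t\big)$, $t\in\mathbb{R}$, be the Möbius gyroline through $C$ and $D$. Then the supporting chord of this gyroline is the set $\{C\boxplus L_{CD}(t):t\in\mathbb{R}\}$. Furthermore, this supporting chord passes through the points $$P_1=C\boxplus C=2\otimes C,\qquad P_2=D\boxplus D=2\otimes D,\qquad P_3=C\boxplus D.$$
   Context: Möbius addition in the ball $\mathbb{R}^n_c$ is $$\mathbf{u}\oplus\mathbf{v}=\frac{\big(1+\frac{2}{c^2}\mathbf{u}\cdot\mathbf{v}+\frac{1}{c^2}\|\mathbf{v}\|^2\big)\mathbf{u}+\big(1-\frac{1}{c^2}\|\mathbf{u}\|^2\big)\mathbf{v}}{1+\frac{2}{c^2}\mathbf{u}\cdot\mathbf{v}+\frac{1}{c^4}\|\mathbf{u}\|^2\|\mathbf{v}\|^2},$$ with $\ominus\mathbf{v}=-\mathbf{v}$. Scalar multiplication: for $r\in\mathbb{R}$ and $\mathbf{v}\neq\mathbf{0}$, $r\otimes\mathbf{v}=\mathbf{v}\otimes r=c\tanh\!\big(r\tanh^{-1}(\|\mathbf{v}\|/c)\big)\frac{\mathbf{v}}{\|\mathbf{v}\|}$, and $r\otimes\mathbf{0}=\mathbf{0}$.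 The gyration generated by $\mathbf{u},\mathbf{v}$ is $\mathrm{gyr}[\mathbf{u},\mathbf{v}]\mathbf{w}=\ominus(\mathbf{u}\oplus\mathbf{v})\oplus\big(\mathbf{u}\oplus(\mathbf{v}\oplus\mathbf{w})\big)$, and Möbius coaddition is $\mathbf{a}\boxplus\mathbf{b}=\mathbf{a}\oplus\mathrm{gyr}[\mathbf{a},\ominus\mathbf{b}]\mathbf{b}$. A Möbius gyroline $L_{CD}$ is (the intersection with the ball of) a Euclidean circular arc or diameter meeting the boundary sphere $\|\mathbf{x}\|=c$ at two endpoints $\lim_{t\to\pm\infty}L_{CD}(t)$; its supporting chord is the set of points of the open ball $\mathbb{R}^n_c$ lying on the Euclidean straight line through these two endpoints. *)

(* Defs.v *)
From HB Require Import structures.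
From mathcomp Require Import all_boot all_order all_algebra.
From mathcomp Require Import all_classical all_reals all_analysis.
Set Implicit Arguments. Unset Strict Implicit. Unset Printing Implicit Defensive.
Import Order.TTheory GRing.Theory Num.Theory.
Import numFieldNormedType.Exports.
Local Open Scope classical_set_scope.
Local Open Scope ring_scope.

Definition dotv (R : realType) (n : nat) (u v : 'rV[R]_n) : R :=
  \sum_(i < n) u 0 i * v 0 i.
Definition enorm (R : realType) (n : nat) (v : 'rV[R]_n) : R :=
  Num.sqrt (dotv v v).

Definition ball_c (R : realType) (n : nat) (c : R) : set 'rV[R]_n :=
  [set v | enorm v < c].

Definition tanhR (R : realType) (x : R) : R :=
  (expR x - expR (- x)) / (expR x + expR (- x)).
Definition artanhR (R : realType) (y : R) : R := ln ((1 + y) / (1 - y)) / 2.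

Definition mob_add (R : realType) (n : nat) (c : R) (u v : 'rV[R]_n) : 'rV[R]_n :=
  (1 + 2 / c ^+ 2 * dotv u v + 1 / c ^+ 4 * dotv u u * dotv v v)^-1 *:
  ((1 + 2 / c ^+ 2 * dotv u v + 1 / c ^+ 2 * dotv v v) *: u
    + (1 - 1 / c ^+ 2 * dotv u u) *: v).

Definition mob_opp (R : realType) (n : nat) (v : 'rV[R]_n) : 'rV[R]_n := - v.

Definition mob_scale (R : realType) (n : nat) (c : R) (r : R) (v : 'rV[R]_n)
  : 'rV[R]_n :=
  if v == 0 then 0
  else (c * tanhR (r * artanhR (enorm v / c)) / enorm v) *: v.

Definition gyr (R : realType) (n : nat) (c : R) (u v w : 'rV[R]_n) : 'rV[R]_n :=
  mob_add c (mob_opp (mob_add c u v)) (mob_add c u (mob_add c v w)).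

Definition mob_coadd (R : realType) (n : nat) (c : R) (a b : 'rV[R]_n) : 'rV[R]_n :=
  mob_add c a (gyr c a (mob_opp b) b).

Definition gyroline (R : realType) (n : nat) (c : R) (C D : 'rV[R]_n) (t : R)
  : 'rV[R]_n :=
  mob_add c C (mob_scale c t (mob_add c (mob_opp C) D)).

Definition supp_chord (R : realType) (n : nat) (c : R) (E1 E2 : 'rV[R]_n)
  : set 'rV[R]_n :=
  [set x | enorm x < c /\ exists s : R, x = E1 + s *: (E2 - E1)].

(* Main.v *)
Require Import Defs.
From HB Require Import structures.
From mathcomp Require Import all_boot all_order all_algebra.
From mathcomp Require Import all_classical all_reals all_analysis.
From mathcomp Require Import ring lra.
Import Order.TTheory GRing.Theory Num.Theory.
Import numFieldNormedType.Exports.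
Local Open Scope classical_set_scope.
Local Open Scope ring_scope.
Set Implicit Arguments. Unset Strict Implicit. Unset Printing Implicit Defensive.


Lemma dotvC (R : realType) n (u v : 'rV[R]_n) : dotv u v = dotv v u.
Proof. by rewrite /dotv; apply: eq_bigr => i _; rewrite mulrC. Qed.

Lemma dotvDl (R : realType) n (u v w : 'rV[R]_n) :
  dotv (u + v) w = dotv u w + dotv v w.
Proof. by rewrite /dotv -big_split; apply: eq_bigr => i _; rewrite mxE mulrDl. Qed.

Lemma dotvZl (R : realType) n k (u w : 'rV[R]_n) :
  dotv (k *: u) w = k * dotv u w.
Proof. by rewrite /dotv mulr_sumr; apply: eq_bigr => i _; rewrite mxE mulrA. Qed.

Lemma dotvDr (R : realType) n (u v w : 'rV[R]_n) :
  dotv w (u + v) = dotv w u + dotv w v.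
Proof. by rewrite dotvC dotvDl !(dotvC w). Qed.

Lemma dotvZr (R : realType) n k (u w : 'rV[R]_n) :
  dotv w (k *: u) = k * dotv w u.
Proof. by rewrite dotvC dotvZl dotvC. Qed.

Lemma dotvNl (R : realType) n (u w : 'rV[R]_n) : dotv (- u) w = - dotv u w.
Proof. by rewrite -scaleN1r dotvZl mulN1r. Qed.

Lemma dotvNr (R : realType) n (u w : 'rV[R]_n) : dotv w (- u) = - dotv w u.
Proof. by rewrite -scaleN1r dotvZr mulN1r. Qed.

Lemma dotv0l (R : realType) n (w : 'rV[R]_n) : dotv 0 w = 0.
Proof. by rewrite -(scale0r 0) dotvZl mul0r. Qed.

Lemma dotv0r (R : realType) n (w : 'rV[R]_n) : dotv w 0 = 0.
Proof. by rewrite dotvC dotv0l. Qed.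

Lemma dotv_ge0 (R : realType) n (v : 'rV[R]_n) : 0 <= dotv v v.
Proof. by rewrite /dotv; apply: sumr_ge0 => i _; rewrite -expr2 sqr_ge0. Qed.

Lemma dotv_eq0 (R : realType) n (v : 'rV[R]_n) : dotv v v = 0 -> v = 0.
Proof.
move=> /eqP; rewrite /dotv psumr_eq0 => [/allP H|i _]; last by rewrite -expr2 sqr_ge0.
apply/rowP => i; rewrite mxE; apply/eqP.
by have := H i (mem_index_enum _); rewrite mulf_eq0 orbb.
Qed.

Lemma enorm_sq (R : realType) n (v : 'rV[R]_n) : enorm v ^+ 2 = dotv v v.
Proof. by rewrite /enorm sqr_sqrtr // dotv_ge0. Qed.

Definition comb (R : realType) n (x y : 'rV[R]_n) (p q : R) := p *: x + q *: y.

Lemma dot_comb (R : realType) n (x y : 'rV[R]_n) p1 q1 p2 q2 :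
  dotv (comb x y p1 q1) (comb x y p2 q2) =
  p1 * p2 * dotv x x + (p1 * q2 + q1 * p2) * dotv x y + q1 * q2 * dotv y y.
Proof.
rewrite /comb !dotvDl !dotvDr !dotvZl !dotvZr (dotvC y x); ring.
Qed.

Definition mden (R : realType) n (c : R) (u v : 'rV[R]_n) :=
  1 + 2 / c ^+ 2 * dotv u v + 1 / c ^+ 4 * dotv u u * dotv v v.

Lemma mob_add_step (R : realType) n (c : R) (x y : 'rV[R]_n) p1 q1 p2 q2 r1 r2 :
  mden c (comb x y p1 q1) (comb x y p2 q2) != 0 ->
  (1 + 2 / c ^+ 2 * dotv (comb x y p1 q1) (comb x y p2 q2)
     + 1 / c ^+ 2 * dotv (comb x y p2 q2) (comb x y p2 q2)) * p1
   + (1 - 1 / c ^+ 2 * dotv (comb x y p1 q1) (comb x y p1 q1)) * p2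
   = r1 * mden c (comb x y p1 q1) (comb x y p2 q2) ->
  (1 + 2 / c ^+ 2 * dotv (comb x y p1 q1) (comb x y p2 q2)
     + 1 / c ^+ 2 * dotv (comb x y p2 q2) (comb x y p2 q2)) * q1
   + (1 - 1 / c ^+ 2 * dotv (comb x y p1 q1) (comb x y p1 q1)) * q2
   = r2 * mden c (comb x y p1 q1) (comb x y p2 q2) ->
  mob_add c (comb x y p1 q1) (comb x y p2 q2) = comb x y r1 r2.
Proof.
rewrite /mob_add -/(mden _ _ _) => Hd E1 E2.
set u := comb x y p1 q1; set v := comb x y p2 q2.
have -> : (1 + 2 / c ^+ 2 * dotv u v + 1 / c ^+ 2 * dotv v v) *: u
        + (1 - 1 / c ^+ 2 * dotv u u) *: v
        = comb x y (r1 * mden c u v) (r2 * mden c u v).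
  by rewrite -E1 -E2 /u /v /comb; apply/rowP => i; rewrite !mxE; ring.
rewrite /comb; apply/rowP => i; rewrite !mxE; field; exact: Hd.
Qed.

Lemma c2_gt0 (R : realType) (c : R) : 0 < c -> 0 < c ^+ 2.
Proof. by move=> c0; apply: exprn_gt0. Qed.

Lemma e_gt0 (R : realType) (c : R) : 0 < c -> 0 < (c ^+ 2)^-1.
Proof. by move=> c0; rewrite invr_gt0 c2_gt0. Qed.

Lemma mden_pos (R : realType) n (c : R) (u v : 'rV[R]_n) :
  0 < c -> dotv u u < c ^+ 2 -> dotv v v < c ^+ 2 -> 0 < mden c u v.
Proof.
move=> c0 Hu Hv.
have E : mden c u v = (1 - dotv u u / c ^+ 2) * (1 - dotv v v / c ^+ 2)
                       + dotv (u + v) (u + v) / c ^+ 2.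
  rewrite /mden !dotvDl !dotvDr (dotvC v u); field.
  by rewrite gt_eqF.
rewrite E; apply: ltr_pwDl; last by apply: divr_ge0; [exact: dotv_ge0|exact: exprn_ge0 (ltW c0)].
have c2 : 0 < c ^+ 2 by exact: exprn_gt0.
apply: mulr_gt0; rewrite subr_gt0 ltr_pdivrMr // mul1r //.
Qed.

Lemma mob_add_def (R : realType) n (c : R) (u v : 'rV[R]_n) :
  mob_add c u v = comb u v
    ((1 + 2 / c ^+ 2 * dotv u v + 1 / c ^+ 2 * dotv v v) / mden c u v)
    ((1 - 1 / c ^+ 2 * dotv u u) / mden c u v).
Proof. by rewrite /mob_add /comb -/(mden _ _ _); apply/rowP => i; rewrite !mxE; ring. Qed.


Lemma c4E (R : realType) (c : R) : 1 / c ^+ 4 = (c ^+ 2)^-1 ^+ 2.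
Proof. by rewrite mul1r exprVn -exprM. Qed.

Lemma mob_add_norm (R : realType) n (c : R) (u v : 'rV[R]_n) : 0 < c ->
  dotv u u < c ^+ 2 -> dotv v v < c ^+ 2 ->
  1 - dotv (mob_add c u v) (mob_add c u v) / c ^+ 2 =
  (1 - dotv u u / c ^+ 2) * (1 - dotv v v / c ^+ 2) / mden c u v.
Proof.
move=> c0 Hu Hv; have d0 := mden_pos c0 Hu Hv.
rewrite mob_add_def dot_comb /mden c4E in d0 *.
move: (c ^+ 2)^-1 (e_gt0 c0) d0 => e e0 d0.
by field; rewrite gt_eqF.
Qed.

Lemma mob_add_ball (R : realType) n (c : R) (u v : 'rV[R]_n) : 0 < c ->
  dotv u u < c ^+ 2 -> dotv v v < c ^+ 2 ->
  dotv (mob_add c u v) (mob_add c u v) < c ^+ 2.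
Proof.
move=> c0 Hu Hv; have := mob_add_norm c0 Hu Hv; have d0 := mden_pos c0 Hu Hv.
have c2 := c2_gt0 c0.
have h1 : 0 < 1 - dotv u u / c ^+ 2 by rewrite subr_gt0 ltr_pdivrMr // mul1r.
have h2 : 0 < 1 - dotv v v / c ^+ 2 by rewrite subr_gt0 ltr_pdivrMr // mul1r.
have h3 := divr_gt0 (mulr_gt0 h1 h2) d0.
move=> E; rewrite -E in h3; move: h3; rewrite subr_gt0 ltr_pdivrMr // mul1r //.
Qed.

Ltac nz := repeat (apply/andP; split); try (apply: lt0r_neq0); try lra; try nra.

Ltac fe c c0 := rewrite ?c4E; move: (e_gt0 c0);
  repeat match goal with H : context [(c ^+ 2)^-1] |- _ => revert H end;
  generalize ((c ^+ 2)^-1) => e; intros; field; nz.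


Lemma mob_add_negK (R : realType) n (c : R) (b : 'rV[R]_n) : mob_add c (- b) b = 0.
Proof.
by rewrite /mob_add !dotvNl !dotvNr ?opprK; apply/rowP => i; rewrite !mxE; ring.
Qed.

Lemma mob_add0r (R : realType) n (c : R) (a : 'rV[R]_n) : mob_add c a 0 = a.
Proof.
rewrite /mob_add !dotv0r; apply/rowP => i; rewrite !mxE.
by rewrite !(mulr0, addr0) invr1 !mul1r.
Qed.

Lemma dotvNN (R : realType) n (b : 'rV[R]_n) : dotv (- b) (- b) = dotv b b.
Proof. by rewrite dotvNl dotvNr opprK. Qed.

Lemma mob_coadd_formula (R : realType) n (c : R) (a b : 'rV[R]_n) : 0 < c ->
  dotv a a < c ^+ 2 -> dotv b b < c ^+ 2 ->
  mob_coadd c a b = comb a b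
    ((1 - dotv b b / c ^+ 2) / (1 - dotv a a / c ^+ 2 * (dotv b b / c ^+ 2)))
    ((1 - dotv a a / c ^+ 2) / (1 - dotv a a / c ^+ 2 * (dotv b b / c ^+ 2))).
Proof.
move=> c0 Ha Hb.
have c2 := c2_gt0 c0.
have hQ : 0 < 1 - dotv a a / c ^+ 2 by rewrite subr_gt0 ltr_pdivrMr // mul1r.
have hQ' : 0 < 1 - dotv b b / c ^+ 2 by rewrite subr_gt0 ltr_pdivrMr // mul1r.
have hA : 0 <= dotv a a / c ^+ 2 by rewrite divr_ge0 // ?dotv_ge0 // ltW.
have hB : 0 <= dotv b b / c ^+ 2 by rewrite divr_ge0 // ?dotv_ge0 // ltW.
have hAB : 0 < 1 - dotv a a / c ^+ 2 * (dotv b b / c ^+ 2) by nra.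
have Hnb : dotv (- b) (- b) < c ^+ 2 by rewrite dotvNN.
have hd1 := mden_pos c0 Ha Hnb.
rewrite /mob_coadd /gyr /mob_opp mob_add_negK mob_add0r.
have ea : a = comb a b 1 0 by rewrite /comb scale1r scale0r addr0.
have eb : - b = comb a b 0 (-1) by rewrite /comb scale0r add0r scaleN1r.
move: hd1; rewrite /mden dotvNr dotvNN c4E => hd1.
set d1 := 1 + 2 / c ^+ 2 * - dotv a b + (c ^+ 2)^-1 ^+ 2 * dotv a a * dotv b b.
have Hw : mob_add c a (- b) = comb a b
    ((1 - 2 * (dotv a b / c ^+ 2) + dotv b b / c ^+ 2) / d1)
    (- (1 - dotv a a / c ^+ 2) / d1).
  rewrite {1}ea eb; apply: mob_add_step; first by rewrite -ea -eb /mden dotvNr dotvNN c4E gt_eqF.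
  - by rewrite /d1 /mden !dot_comb; fe c c0.
  - by rewrite /d1 /mden !dot_comb; fe c c0.
have Hwb : dotv (mob_add c a (- b)) (mob_add c a (- b)) < c ^+ 2 by exact: mob_add_ball.
have Hwb' : dotv (- mob_add c a (- b)) (- mob_add c a (- b)) < c ^+ 2 by rewrite dotvNN.
have hd2 := mden_pos c0 Hwb' Ha.
have Hzb : dotv (mob_add c (- mob_add c a (- b)) a) (mob_add c (- mob_add c a (- b)) a) < c ^+ 2.
  exact: mob_add_ball.
have hd3 := mden_pos c0 Ha Hzb.
have Hz : mob_add c (- mob_add c a (- b)) a = comb a b
    (- 2 * (dotv b b / c ^+ 2) * (1 - dotv a b / c ^+ 2) / d1)
    ((1 - dotv a a / c ^+ 2 * (dotv b b / c ^+ 2)) / d1).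
  have ew : - mob_add c a (- b) = comb a b
    (- ((1 - 2 * (dotv a b / c ^+ 2) + dotv b b / c ^+ 2) / d1))
    (- (- (1 - dotv a a / c ^+ 2) / d1)).
    by rewrite Hw /comb; apply/rowP => i; rewrite !mxE; ring.
  rewrite ew [X in mob_add _ _ X]ea; apply: mob_add_step; first by rewrite -ew -ea gt_eqF.
  - by rewrite /d1 /mden !dot_comb; fe c c0.
  - by rewrite /d1 /mden !dot_comb; fe c c0.
rewrite Hz in hd3 *.
rewrite [X in mob_add _ X]ea; apply: mob_add_step; first by rewrite -ea gt_eqF.
  - by rewrite /d1 /mden !dot_comb; fe c c0.
  - by rewrite /d1 /mden !dot_comb; fe c c0.
Qed.

Definition quad (R : realType) (a b k x : R) := a + b * x + k * (x * x).

Lemma f_form (R : realType) n (c : R) (C u : 'rV[R]_n) Ah Xh x : 0 < c ->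
  dotv u u = c ^+ 2 -> dotv C C = Ah * c ^+ 2 -> dotv C u = Xh * c ^+ 2 ->
  mob_add c C (x *: u) = comb C u (quad 1 (2 * Xh) 1 x / quad 1 (2 * Xh) Ah x)
                                  ((1 - Ah) * x / quad 1 (2 * Xh) Ah x).
Proof.
move=> c0 Hu HA HX; have cn : c != 0 by rewrite gt_eqF.
rewrite mob_add_def.
have -> : 1 + 2 / c ^+ 2 * dotv C (x *: u) + 1 / c ^+ 2 * dotv (x *: u) (x *: u)
          = quad 1 (2 * Xh) 1 x by rewrite /quad dotvZr dotvZl dotvZr Hu HX; field.
have -> : 1 - 1 / c ^+ 2 * dotv C C = 1 - Ah by rewrite HA; field.
have -> : mden c C (x *: u) = quad 1 (2 * Xh) Ah x.
  by rewrite /mden /quad dotvZr dotvZl dotvZr Hu HX HA; field.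
move: (quad 1 _ _ x) (quad 1 _ 1 x) => D N.
by rewrite /comb; apply/rowP => i; rewrite !mxE; ring.
Qed.

Lemma qpos (R : realType) n (c : R) (C u : 'rV[R]_n) Ah Xh x k : 0 < c ->
  dotv u u = c ^+ 2 -> dotv C C = Ah * c ^+ 2 -> dotv C u = Xh * c ^+ 2 ->
  Ah < 1 -> x ^+ 2 <= 1 -> 0 < k -> 0 < k * (1 - x ^+ 2) + (Ah + 2 * Xh * x + x ^+ 2).
Proof.
move=> c0 Hu HA HX A1 x1 k0.
have c2 := c2_gt0 c0.
have Hq : dotv (C + x *: u) (C + x *: u) = (Ah + 2 * Xh * x + x ^+ 2) * c ^+ 2.
  by rewrite !dotvDl !dotvDr !dotvZl !dotvZr (dotvC u C) Hu HA HX; ring.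
have q0 : 0 <= Ah + 2 * Xh * x + x ^+ 2.
  by rewrite -(pmulr_lge0 _ c2) -Hq dotv_ge0.
case: (ltrP (x ^+ 2) 1) => x2; first by nra.
have x2e : x ^+ 2 = 1 by apply/eqP; rewrite eq_le x1 x2.
suff h : 0 < Ah + 2 * Xh * x + x ^+ 2.
  have -> : k * (1 - x ^+ 2) = 0 by rewrite x2e subrr mulr0.
  by rewrite add0r.
rewrite lt_def q0 andbT.
apply/eqP => q00; move: Hq; rewrite q00 mul0r => /dotv_eq0 /eqP.
rewrite addr_eq0 => /eqP HC.
have : dotv C C = c ^+ 2 by rewrite HC dotvNN dotvZl dotvZr Hu mulrA -expr2 x2e mul1r.
rewrite HA => /eqP; rewrite -subr_eq0 -[X in _ - X]mul1r -mulrBl mulf_eq0 (gt_eqF c2) orbF.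
rewrite subr_eq0 => /eqP; lra.
Qed.


Lemma expR_lim_y (R : realType) (k : R) : 0 < k ->
  expR (- (k * t)) @[t --> +oo] --> 0.
Proof.
move=> k0.
have H1 : (k * t) @[t --> +oo] --> +oo.
  by apply: gt0_cvgMry => //; exact: cvg_id.
exact: (cvg_comp (fun t => k * t) (fun x => expR (- x)) H1 (@cvgr_expR R)).
Qed.

Lemma expR_lim_Ny (R : realType) (k : R) : 0 < k ->
  expR (k * t) @[t --> -oo] --> 0.
Proof.
move=> k0.
have H1 : (- t : R) @[t --> -oo] --> +oo.
  apply/(@cvgryPge R R) => A; exists (- A); split; first exact: num_real.
  by move=> x /=; rewrite ltrNr => /ltW.
have := cvg_comp (fun t => - t) (fun x => expR (- (k * x))) H1 (expR_lim_y k0).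
by apply: cvg_trans; apply: near_eq_cvg; near=> t => /=; rewrite mulrN opprK.
Unshelve. all: end_near.
Qed.

Lemma tanh_p (R : realType) (x : R) : tanhR x = 2 * (1 + expR (- (2 * x)))^-1 - 1.
Proof.
have -> : - (2 * x) = - x + - x by rewrite mulr2n; ring.
rewrite /tanhR expRD !expRN; have E0 := expR_gt0 x.
by field; rewrite ?gt_eqF //; apply/andP; split; rewrite gt_eqF //; nra.
Qed.

Lemma tanh_n (R : realType) (x : R) : tanhR x = 1 - 2 * (1 + expR (2 * x))^-1.
Proof.
have -> : 2 * x = x + x by ring.
rewrite /tanhR expRD !expRN; have E0 := expR_gt0 x.
by field; rewrite ?gt_eqF //; apply/andP; split; rewrite gt_eqF //; nra.
Qed.

Lemma tanh_lim_y (R : realType) (al : R) : 0 < al ->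
  tanhR (t * al) @[t --> +oo] --> (1 : R).
Proof.
move=> a0.
have E : (fun t => tanhR (t * al)) = (fun t => 2 * (1 + expR (- ((2 * al) * t)))^-1 - 1).
  by apply: funext => t; rewrite tanh_p (mulrC t) mulrA.
rewrite E.
have H0 := expR_lim_y (mulr_gt0 (ltr0Sn _ 1) a0).
have H2 : (1 + expR (- (2 * al * t))) @[t --> +oo] --> (1 : R).
  rewrite -[X in _ --> X]addr0; apply: cvgD => //; exact: cvg_cst.
have H3 : ((1 + expR (- (2 * al * t)))^-1) @[t --> +oo] --> (1 : R)^-1.
  by apply: cvgV => //; rewrite oner_neq0.
have H4 : (2 * (1 + expR (- (2 * al * t)))^-1) @[t --> +oo] --> 2 * (1 : R)^-1.
  exact: cvgMl_tmp.
rewrite invr1 mulr1 in H4.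
have H5 : (2 * (1 + expR (- (2 * al * t)))^-1 - 1) @[t --> +oo] --> (2 - 1 : R).
  by apply: cvgB => //; exact: cvg_cst.
by rewrite (_ : 2 - 1 = 1 :> R) in H5; [exact: H5 | ring].
Qed.

Lemma tanh_lim_Ny (R : realType) (al : R) : 0 < al ->
  tanhR (t * al) @[t --> -oo] --> (-1 : R).
Proof.
move=> a0.
have E : (fun t => tanhR (t * al)) = (fun t => 1 - 2 * (1 + expR ((2 * al) * t))^-1).
  by apply: funext => t; rewrite tanh_n (mulrC t) mulrA.
rewrite E.
have H0 := expR_lim_Ny (mulr_gt0 (ltr0Sn _ 1) a0).
have H2 : (1 + expR (2 * al * t)) @[t --> -oo] --> (1 : R).
  rewrite -[X in _ --> X]addr0; apply: cvgD => //; exact: cvg_cst.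
have H3 : ((1 + expR (2 * al * t))^-1) @[t --> -oo] --> (1 : R)^-1.
  by apply: cvgV => //; rewrite oner_neq0.
have H4 : (2 * (1 + expR (2 * al * t))^-1) @[t --> -oo] --> 2 * (1 : R)^-1.
  exact: cvgMl_tmp.
rewrite invr1 mulr1 in H4.
have H5 : (1 - 2 * (1 + expR (2 * al * t))^-1) @[t --> -oo] --> (1 - 2 : R).
  by apply: cvgB => //; exact: cvg_cst.
by rewrite (_ : 1 - 2 = -1 :> R) in H5; [exact: H5 | ring].
Qed.

Lemma artanh_q (R : realType) (y : R) : -1 < y < 1 ->
  expR (2 * artanhR y) = (1 + y) / (1 - y).
Proof.
case/andP => y1 y2.
have q0 : 0 < (1 + y) / (1 - y) by apply: divr_gt0; lra.
rewrite /artanhR (_ : 2 * (ln ((1 + y) / (1 - y)) / 2) = ln ((1 + y) / (1 - y))).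
  by rewrite lnK // posrE.
by field.
Qed.

Lemma tanh_artanh (R : realType) (y : R) : -1 < y < 1 -> tanhR (artanhR y) = y.
Proof.
move=> Hy; rewrite tanh_n artanh_q //; case/andP: Hy => y1 y2.
by field; nz.
Qed.

Lemma tanh_2artanh (R : realType) (y : R) : -1 < y < 1 ->
  tanhR (2 * artanhR y) = 2 * y / (1 + y ^+ 2).
Proof.
move=> Hy; rewrite tanh_n (_ : 2 * (2 * artanhR y) = 2 * artanhR y + 2 * artanhR y).
  rewrite expRD artanh_q //; case/andP: Hy => y1 y2.
  by field; nz.
by ring.
Qed.

Lemma artanh_gt0 (R : realType) (y : R) : 0 < y < 1 -> 0 < artanhR y.
Proof.
case/andP => y1 y2; rewrite /artanhR; apply: divr_gt0 => //.
by apply: ln_gt0; rewrite ltr_pdivlMr; lra.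
Qed.


Lemma mden_xu (R : realType) n (c : R) (C u : 'rV[R]_n) Ah Xh x : 0 < c ->
  dotv u u = c ^+ 2 -> dotv C C = Ah * c ^+ 2 -> dotv C u = Xh * c ^+ 2 ->
  mden c C (x *: u) = quad 1 (2 * Xh) Ah x.
Proof.
move=> c0 Hu HA HX; have cn : c != 0 by rewrite gt_eqF.
by rewrite /mden /quad dotvZr dotvZl dotvZr Hu HX HA; field.
Qed.

Lemma coadd_F (R : realType) n (c : R) (C u : 'rV[R]_n) Ah Xh x : 0 < c ->
  dotv u u = c ^+ 2 -> dotv C C = Ah * c ^+ 2 -> dotv C u = Xh * c ^+ 2 ->
  Ah < 1 -> x ^+ 2 < 1 ->
  mob_coadd c C (mob_add c C (x *: u)) =
  comb C u (2 * (1 + Xh * x) / (1 + Ah + 2 * Xh * x)) ((1 - Ah) * x / (1 + Ah + 2 * Xh * x)).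
Proof.
move=> c0 Hu HA HX A1 x1; have cn : c != 0 by rewrite gt_eqF.
have c2 := c2_gt0 c0.
have HC : dotv C C < c ^+ 2 by rewrite HA; nra.
have Hxu : dotv (x *: u) (x *: u) < c ^+ 2 by rewrite dotvZl dotvZr Hu mulrA -expr2; nra.
have Hn := mob_add_norm c0 HC Hxu.
have hD : 0 < quad 1 (2 * Xh) Ah x.
  have := @qpos _ _ c C u Ah Xh x (1 - Ah) c0 Hu HA HX A1 (ltW x1) ltac:(lra).
  by rewrite /quad expr2; nra.
have hG : 0 < 1 + Ah + 2 * Xh * x.
  have := @qpos _ _ c C u Ah Xh x 1 c0 Hu HA HX A1 (ltW x1) ltr01.
  by nra.
rewrite mob_coadd_formula //; last exact: mob_add_ball.
have EB : dotv (mob_add c C (x *: u)) (mob_add c C (x *: u)) / c ^+ 2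
          = 1 - (1 - Ah) * (1 - x ^+ 2) / quad 1 (2 * Xh) Ah x.
  rewrite (mden_xu x c0 Hu HA HX) HA (dotvZl x u (x *: u)) (dotvZr x u u) Hu in Hn.
  rewrite (_ : Ah * c ^+ 2 / c ^+ 2 = Ah) in Hn; last by field.
  rewrite (_ : x * (x * c ^+ 2) / c ^+ 2 = x ^+ 2) in Hn; last by field.
  by rewrite -Hn; ring.
rewrite EB (_ : dotv C C / c ^+ 2 = Ah); last by rewrite HA; field.
rewrite (f_form x c0 Hu HA HX) /comb; apply/rowP => i; rewrite !mxE.
move: hD; rewrite /quad => hD.
have h1 : 0 < (1 - Ah) * (1 + Ah + 2 * Xh * x) by nra.
by field; nz.
Qed.

Definition Fv (R : realType) n (C u : 'rV[R]_n) (Ah Xh x : R) :=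
  comb C u (2 * (1 + Xh * x) / (1 + Ah + 2 * Xh * x)) ((1 - Ah) * x / (1 + Ah + 2 * Xh * x)).

Lemma Gpos (R : realType) n (c : R) (C u : 'rV[R]_n) Ah Xh x : 0 < c ->
  dotv u u = c ^+ 2 -> dotv C C = Ah * c ^+ 2 -> dotv C u = Xh * c ^+ 2 ->
  Ah < 1 -> x ^+ 2 <= 1 -> 0 < 1 + Ah + 2 * Xh * x.
Proof.
move=> c0 Hu HA HX A1 x1.
have := @qpos _ _ c C u Ah Xh x 1 c0 Hu HA HX A1 x1 ltr01.
by nra.
Qed.

Lemma Esig (R : realType) n (c : R) (C u : 'rV[R]_n) Ah Xh s : 0 < c ->
  dotv u u = c ^+ 2 -> dotv C C = Ah * c ^+ 2 -> dotv C u = Xh * c ^+ 2 ->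
  Ah < 1 -> s * s = 1 -> mob_add c C (s *: u) = Fv C u Ah Xh s.
Proof.
move=> c0 Hu HA HX A1 s1.
have hG := Gpos (x:=s) c0 Hu HA HX A1 (ltac:(rewrite expr2 s1; lra) : s ^+ 2 <= 1).
rewrite (f_form s c0 Hu HA HX) /Fv /quad s1.
by rewrite /comb; apply/rowP => i; rewrite !mxE; field; nz.
Qed.

Lemma Fv_line (R : realType) n (c : R) (C u : 'rV[R]_n) Ah Xh x : 0 < c ->
  dotv u u = c ^+ 2 -> dotv C C = Ah * c ^+ 2 -> dotv C u = Xh * c ^+ 2 ->
  Ah < 1 -> x ^+ 2 <= 1 ->
  Fv C u Ah Xh x = Fv C u Ah Xh (-1) +
    ((1 + Ah + 2 * Xh) * (1 + x) / (2 * (1 + Ah + 2 * Xh * x))) *: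
       (Fv C u Ah Xh 1 - Fv C u Ah Xh (-1)).
Proof.
move=> c0 Hu HA HX A1 x1.
have hG := Gpos (x:=x) c0 Hu HA HX A1 x1.
have hG1 := Gpos (x:=1) c0 Hu HA HX A1 (ltac:(rewrite expr1n; lra) : (1 : R) ^+ 2 <= 1).
have hGm := Gpos (x:=-1) c0 Hu HA HX A1 (ltac:(rewrite sqrrN expr1n; lra) : (-1 : R) ^+ 2 <= 1).
rewrite /Fv /comb; apply/rowP => i; rewrite !mxE.
by field; nz.
Qed.

Lemma seg_norm (R : realType) n (c : R) (P Q : 'rV[R]_n) s :
  dotv P P = c ^+ 2 -> dotv Q Q = c ^+ 2 ->
  dotv (P + s *: (Q - P)) (P + s *: (Q - P)) = c ^+ 2 - 2 * s * (1 - s) * (c ^+ 2 - dotv P Q).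
Proof.
move=> HP HQ.
rewrite !dotvDl !dotvDr !dotvZl !dotvZr !dotvDl !dotvDr !dotvNl !dotvNr (dotvC Q P) HP HQ.
ring.
Qed.

Lemma Fv_norm (R : realType) n (c : R) (C u : 'rV[R]_n) Ah Xh s : 0 < c ->
  dotv u u = c ^+ 2 -> dotv C C = Ah * c ^+ 2 -> dotv C u = Xh * c ^+ 2 ->
  Ah < 1 -> s * s = 1 -> dotv (Fv C u Ah Xh s) (Fv C u Ah Xh s) = c ^+ 2.
Proof.
move=> c0 Hu HA HX A1 s1.
have hG := Gpos (x:=s) c0 Hu HA HX A1 (ltac:(rewrite expr2 s1; lra) : s ^+ 2 <= 1).
rewrite /Fv dot_comb Hu HA HX.
have H2 : (s - 1) * (s + 1) == 0 by rewrite mulrDr mulrBl s1 mulr1 mul1r; apply/eqP; ring.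
move: hG; move: H2; rewrite mulf_eq0 subr_eq0 addr_eq0 => /orP[] /eqP -> hG.
- by rewrite mulr1 in hG; field; nz.
- by rewrite mulrN1 in hG; field; nz.
Qed.

Lemma enorm_lt (R : realType) n (c : R) (v : 'rV[R]_n) : 0 < c ->
  (enorm v < c) = (dotv v v < c ^+ 2).
Proof.
move=> c0; rewrite /enorm {1}(_ : c = Num.sqrt (c ^+ 2)); last by rewrite sqrtr_sqr gtr0_norm.
by rewrite ltr_sqrt ?c2_gt0.
Qed.

Lemma Fv_cross (R : realType) n (c : R) (C u : 'rV[R]_n) Ah Xh : 0 < c ->
  dotv u u = c ^+ 2 -> dotv C C = Ah * c ^+ 2 -> dotv C u = Xh * c ^+ 2 ->
  Ah < 1 -> 0 < c ^+ 2 - dotv (Fv C u Ah Xh (-1)) (Fv C u Ah Xh 1).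
Proof.
move=> c0 Hu HA HX A1.
have hG1 := Gpos (x:=1) c0 Hu HA HX A1 (ltac:(rewrite expr1n; lra) : (1 : R) ^+ 2 <= 1).
have hGm := Gpos (x:=-1) c0 Hu HA HX A1 (ltac:(rewrite sqrrN expr1n; lra) : (-1 : R) ^+ 2 <= 1).
have c2 := c2_gt0 c0.
rewrite /Fv dot_comb Hu HA HX.
rewrite (_ : _ - _ = 2 * c ^+ 2 * (1 - Ah) ^+ 2 / ((1 + Ah + 2 * Xh * 1) * (1 + Ah + 2 * Xh * -1))).
  apply: divr_gt0; last exact: mulr_gt0.
  by apply: mulr_gt0; [exact: mulr_gt0 | apply: exprn_gt0; lra].
by field; nz.
Qed.

Lemma chord_Fv (R : realType) n (c : R) (C u : 'rV[R]_n) Ah Xh x : 0 < c ->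
  dotv u u = c ^+ 2 -> dotv C C = Ah * c ^+ 2 -> dotv C u = Xh * c ^+ 2 ->
  Ah < 1 -> x ^+ 2 < 1 ->
  supp_chord c (Fv C u Ah Xh (-1)) (Fv C u Ah Xh 1) (Fv C u Ah Xh x).
Proof.
move=> c0 Hu HA HX A1 x1.
have hG := Gpos (x:=x) c0 Hu HA HX A1 (ltW x1).
have hG1 := Gpos (x:=1) c0 Hu HA HX A1 (ltac:(rewrite expr1n; lra) : (1 : R) ^+ 2 <= 1).
have hGm := Gpos (x:=-1) c0 Hu HA HX A1 (ltac:(rewrite sqrrN expr1n; lra) : (-1 : R) ^+ 2 <= 1).
have xb : -1 < x < 1.
  by apply/andP; split; nra.
rewrite (Fv_line c0 Hu HA HX A1 (ltW x1)).
set s := (1 + Ah + 2 * Xh) * (1 + x) / (2 * (1 + Ah + 2 * Xh * x)).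
have s0 : 0 < s by rewrite /s; apply: divr_gt0; [apply: mulr_gt0|apply: mulr_gt0]; lra.
have s1 : 0 < 1 - s.
  rewrite (_ : 1 - s = (1 + Ah - 2 * Xh) * (1 - x) / (2 * (1 + Ah + 2 * Xh * x))).
    by apply: divr_gt0; [apply: mulr_gt0|apply: mulr_gt0]; lra.
  by rewrite /s; field; nz.
split; last by exists s.
rewrite enorm_lt // (seg_norm (c:=c)) ?(Fv_norm c0 Hu HA HX A1) ?mulr1 ?mulrN1 ?opprK //.
have := Fv_cross c0 Hu HA HX A1.
move=> hc; have p := mulr_gt0 (mulr_gt0 s0 s1) hc; clearbody s; nra.
Qed.

Lemma chord_inv (R : realType) n (c : R) (C u : 'rV[R]_n) Ah Xh s : 0 < c ->
  dotv u u = c ^+ 2 -> dotv C C = Ah * c ^+ 2 -> dotv C u = Xh * c ^+ 2 ->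
  Ah < 1 -> 0 < s < 1 ->
  exists x, x ^+ 2 < 1 /\ Fv C u Ah Xh x = Fv C u Ah Xh (-1) +
            s *: (Fv C u Ah Xh 1 - Fv C u Ah Xh (-1)).
Proof.
move=> c0 Hu HA HX A1 /andP[s0 s1].
have hG1 := Gpos (x:=1) c0 Hu HA HX A1 (ltac:(rewrite expr1n; lra) : (1 : R) ^+ 2 <= 1).
have hGm := Gpos (x:=-1) c0 Hu HA HX A1 (ltac:(rewrite sqrrN expr1n; lra) : (-1 : R) ^+ 2 <= 1).
rewrite mulr1 in hG1; rewrite mulrN1 in hGm.
set G1 := 1 + Ah + 2 * Xh in hG1; set Gm := 1 + Ah - 2 * Xh in hGm.
have a1 : 0 < s * Gm by exact: mulr_gt0.
have a2 : 0 < (1 - s) * G1 by apply: mulr_gt0; lra.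
exists ((s * Gm - (1 - s) * G1) / (s * Gm + (1 - s) * G1)).
have x1 : ((s * Gm - (1 - s) * G1) / (s * Gm + (1 - s) * G1)) ^+ 2 < 1.
  have dpos : 0 < s * Gm + (1 - s) * G1 by lra.
  rewrite expr_div_n ltr_pdivrMr; last exact: exprn_gt0.
  rewrite mul1r !expr2; clearbody G1 Gm; nra.
split=> //.
rewrite (Fv_line c0 Hu HA HX A1 (ltW x1)); congr (_ + _ *: _).
rewrite /G1 /Gm in a1 a2 *.
have hp := mulr_gt0 hG1 hGm; rewrite /G1 /Gm in hp; clearbody G1 Gm.
by field; nz.
Qed.


Lemma mob_cancel (R : realType) n (c : R) (a b : 'rV[R]_n) : 0 < c ->
  dotv a a < c ^+ 2 -> dotv b b < c ^+ 2 -> mob_add c a (mob_add c (- a) b) = b.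
Proof.
move=> c0 Ha Hb.
have c2 := c2_gt0 c0.
have hQ : 0 < 1 - dotv a a / c ^+ 2 by rewrite subr_gt0 ltr_pdivrMr // mul1r.
have Hna : dotv (- a) (- a) < c ^+ 2 by rewrite dotvNN.
have hd1 := mden_pos c0 Hna Hb.
have Hw := mob_add_ball c0 Hna Hb.
have hd2 := mden_pos c0 Ha Hw.
have ea : a = comb a b 1 0 by rewrite /comb scale1r scale0r addr0.
have eb : b = comb a b 0 1 by rewrite /comb scale0r add0r scale1r.
have ena : - a = comb a b (-1) 0 by rewrite /comb scale0r addr0 scaleN1r.
move: hd1; rewrite /mden dotvNl dotvNN c4E => hd1.
set d1 := 1 + 2 / c ^+ 2 * - dotv a b + (c ^+ 2)^-1 ^+ 2 * dotv a a * dotv b b.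
have Hin : mob_add c (- a) b = comb a b
    (- (1 - 2 * (dotv a b / c ^+ 2) + dotv b b / c ^+ 2) / d1)
    ((1 - dotv a a / c ^+ 2) / d1).
  rewrite ena [X in mob_add _ _ X]eb; apply: mob_add_step.
    by rewrite -ena -eb /mden dotvNl dotvNN c4E gt_eqF.
  - by rewrite /d1 /mden !dot_comb; fe c c0.
  - by rewrite /d1 /mden !dot_comb; fe c c0.
rewrite Hin in hd2 *.
rewrite [X in mob_add _ X]ea [RHS]eb; apply: mob_add_step; first by rewrite -ea gt_eqF.
- by rewrite /d1 /mden !dot_comb; fe c c0.
- by rewrite /d1 /mden !dot_comb; fe c c0.
Qed.

Lemma enorm_gt0 (R : realType) n (v : 'rV[R]_n) : v != 0 -> 0 < enorm v.
Proof.
move=> v0; rewrite /enorm sqrtr_gt0 lt_def dotv_ge0 andbT.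
by apply/eqP => /dotv_eq0 /eqP; apply/negP.
Qed.

Lemma mob_scale_2 (R : realType) n (c : R) (v : 'rV[R]_n) : 0 < c ->
  dotv v v < c ^+ 2 -> mob_scale c 2 v = (2 / (1 + dotv v v / c ^+ 2)) *: v.
Proof.
move=> c0 Hv; rewrite /mob_scale; case: eqP => [->|/eqP v0]; first by rewrite scaler0.
have nv := enorm_gt0 v0.
have nvc : enorm v < c by rewrite enorm_lt.
have y01 : -1 < enorm v / c < 1.
  have := divr_gt0 nv c0.
  by move=> h; apply/andP; split; [lra|rewrite ltr_pdivrMr // mul1r].
rewrite tanh_2artanh // -enorm_sq.
congr (_ *: _); field; nz.
Qed.

Lemma mob_scale_gen (R : realType) n (c t : R) (a : 'rV[R]_n) : a != 0 ->
  mob_scale c t a = tanhR (t * artanhR (enorm a / c)) *: ((c / enorm a) *: a).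
Proof.
move=> a0; rewrite /mob_scale (negbTE a0) scalerA; congr (_ *: _); ring.
Qed.

Lemma coadd_self (R : realType) n (c : R) (v : 'rV[R]_n) : 0 < c ->
  dotv v v < c ^+ 2 -> mob_coadd c v v = mob_scale c 2 v.
Proof.
move=> c0 Hv; have c2 := c2_gt0 c0.
have hQ : 0 < 1 - dotv v v / c ^+ 2 by rewrite subr_gt0 ltr_pdivrMr // mul1r.
have hV : 0 <= dotv v v / c ^+ 2 by rewrite divr_ge0 // ?dotv_ge0 // ltW.
rewrite mob_coadd_formula // mob_scale_2 // /comb; apply/rowP => i; rewrite !mxE.
move: (dotv v v / c ^+ 2) hQ hV => V hQ hV.
by field; nz.
Qed.

Lemma scale2_f (R : realType) n (c : R) (C u : 'rV[R]_n) Ah Xh x : 0 < c ->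
  dotv u u = c ^+ 2 -> dotv C C = Ah * c ^+ 2 -> dotv C u = Xh * c ^+ 2 ->
  Ah < 1 -> x ^+ 2 < 1 ->
  mob_scale c 2 (mob_add c C (x *: u)) = Fv C u Ah Xh (2 * x / (1 + x ^+ 2)).
Proof.
move=> c0 Hu HA HX A1 x1; have cn : c != 0 by rewrite gt_eqF.
have c2 := c2_gt0 c0.
have HC : dotv C C < c ^+ 2 by rewrite HA; nra.
have Hxu : dotv (x *: u) (x *: u) < c ^+ 2 by rewrite dotvZl dotvZr Hu mulrA -expr2; nra.
have Hn := mob_add_norm c0 HC Hxu.
have hD : 0 < quad 1 (2 * Xh) Ah x.
  have := @qpos _ _ c C u Ah Xh x (1 - Ah) c0 Hu HA HX A1 (ltW x1) ltac:(lra).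
  by rewrite /quad expr2; nra.
have x2 : (2 * x / (1 + x ^+ 2)) ^+ 2 <= 1.
  rewrite expr_div_n ler_pdivrMr; last by apply: exprn_gt0; nra.
  by rewrite mul1r !expr2; nra.
have hG2 := Gpos (x:=2 * x / (1 + x ^+ 2)) c0 Hu HA HX A1 x2.
have hG2' : 0 < (1 + Ah) * (1 + x ^+ 2) + 4 * Xh * x.
  have h := mulr_gt0 hG2 (ltac:(nra) : 0 < 1 + x ^+ 2).
  have E : (1 + Ah + 2 * Xh * (2 * x / (1 + x ^+ 2))) * (1 + x ^+ 2)
         = (1 + Ah) * (1 + x ^+ 2) + 4 * Xh * x by field; nz.
  by rewrite E in h.
rewrite mob_scale_2 //; last exact: mob_add_ball.
have EB : dotv (mob_add c C (x *: u)) (mob_add c C (x *: u)) / c ^+ 2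
          = 1 - (1 - Ah) * (1 - x ^+ 2) / quad 1 (2 * Xh) Ah x.
  rewrite (mden_xu x c0 Hu HA HX) HA (dotvZl x u (x *: u)) (dotvZr x u u) Hu in Hn.
  rewrite (_ : Ah * c ^+ 2 / c ^+ 2 = Ah) in Hn; last by field.
  rewrite (_ : x * (x * c ^+ 2) / c ^+ 2 = x ^+ 2) in Hn; last by field.
  by rewrite -Hn; ring.
rewrite EB (f_form x c0 Hu HA HX) /Fv /comb; apply/rowP => i; rewrite !mxE.
move: hD; rewrite /quad => hD.
by field; nz.
Qed.


Lemma quad_lim (R : realType) (F : set_system R) {FF : Filter F} (g : R -> R) l a b k :
  g @ F --> l -> quad a b k (g t) @[t --> F] --> quad a b k l.
Proof.
move=> gl; rewrite /quad.
apply: cvgD; first apply: cvgD.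
- exact: cvg_cst.
- exact: cvgMl_tmp.
- by apply: cvgMl_tmp; apply: cvgM.
Qed.

Lemma f_lim (R : realType) n (C u : 'rV[R]_n) Ah Xh (F : set_system R) {FF : Filter F}
  (g : R -> R) l : g @ F --> l -> quad 1 (2 * Xh) Ah l != 0 ->
  comb C u (quad 1 (2 * Xh) 1 (g t) / quad 1 (2 * Xh) Ah (g t))
           ((1 - Ah) * g t / quad 1 (2 * Xh) Ah (g t)) @[t --> F] -->
  comb C u (quad 1 (2 * Xh) 1 l / quad 1 (2 * Xh) Ah l)
           ((1 - Ah) * l / quad 1 (2 * Xh) Ah l).
Proof.
move=> gl hl; rewrite /comb.
have hV : (quad 1 (2 * Xh) Ah (g t))^-1 @[t --> F] --> (quad 1 (2 * Xh) Ah l)^-1.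
  by apply: cvgV => //; exact: quad_lim.
apply: cvgD; apply: cvgZ; try exact: cvg_cst.
- by apply: cvgM => //; exact: quad_lim.
- by apply: cvgM => //; exact: cvgMl_tmp.
Qed.

Lemma tanh_sq_lt1 (R : realType) (z : R) : tanhR z ^+ 2 < 1.
Proof.
rewrite tanh_p; have e0 := expR_gt0 (- (2 * z)).
set e := expR _ in e0 *.
have h1 : 0 < 2 * (1 + e)^-1 by apply: mulr_gt0 => //; rewrite invr_gt0; lra.
have h2 : 2 * (1 + e)^-1 < 2.
  rewrite -[X in _ < X]mulr1 ltr_pM2l // invf_lt1; lra.
rewrite expr2; nra.
Qed.

Theorem theorem3 (R : realType) (n : nat) (c : R) (C D : 'rV[R]_n) :
  0 < c -> (2 <= n)%N ->
  enorm C < c -> enorm D < c -> C != D ->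
  exists E1 E2 : 'rV[R]_n,
    [/\ gyroline c C D t @[t --> -oo] --> E1,
        gyroline c C D t @[t --> +oo] --> E2,
        supp_chord c E1 E2 = range (fun t : R => mob_coadd c C (gyroline c C D t))
      & [/\ mob_coadd c C C = mob_scale c 2 C /\ supp_chord c E1 E2 (mob_coadd c C C),
            mob_coadd c D D = mob_scale c 2 D /\ supp_chord c E1 E2 (mob_coadd c D D)
          & supp_chord c E1 E2 (mob_coadd c C D)]].
Proof.
move=> c0 _ HCn HDn CD.
have c2 := c2_gt0 c0.
have cn : c != 0 by rewrite gt_eqF.
have HC : dotv C C < c ^+ 2 by rewrite -enorm_lt.
have HD : dotv D D < c ^+ 2 by rewrite -enorm_lt.
have Ha : dotv (mob_add c (- C) D) (mob_add c (- C) D) < c ^+ 2.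
  by apply: mob_add_ball; rewrite ?dotvNN.
have Hcan := mob_cancel c0 HC HD.
set a := mob_add c (- C) D in Ha Hcan.
have a0 : a != 0.
  apply/eqP => a0; move: Hcan; rewrite a0 mob_add0r => E.
  by rewrite E eqxx in CD.
have na0 := enorm_gt0 a0.
have nac : enorm a < c by rewrite enorm_lt.
set na := enorm a in na0 nac.
set u := (c / na) *: a.
have Hu : dotv u u = c ^+ 2.
  rewrite /u dotvZl dotvZr -enorm_sq -/na; field; nz.
set Ah := dotv C C / c ^+ 2.
set Xh := dotv C u / c ^+ 2.
have HA : dotv C C = Ah * c ^+ 2 by rewrite /Ah; field.
have HX : dotv C u = Xh * c ^+ 2 by rewrite /Xh; field.
have A1 : Ah < 1 by rewrite /Ah ltr_pdivrMr // mul1r.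
clearbody Ah Xh.
have y01 : 0 < na / c < 1.
  by apply/andP; split; [exact: divr_gt0 | rewrite ltr_pdivrMr // mul1r].
have al0 := artanh_gt0 y01.
set al := artanhR (na / c) in al0.
have Hgy : forall t, gyroline c C D t = mob_add c C (tanhR (t * al) *: u).
  by move=> t; rewrite /gyroline /mob_opp -/a mob_scale_gen.
have ED : mob_add c C ((na / c) *: u) = D.
  by rewrite /u scalerA (_ : na / c * (c / na) = 1) ?scale1r //; field; nz.
have y1 : (na / c) ^+ 2 < 1 by case/andP: y01 => h1 h2; rewrite expr2; nra.
have hq : forall s : R, s * s = 1 -> quad 1 (2 * Xh) Ah s != 0.
  move=> s s1.
  have := @qpos _ _ c C u Ah Xh s (1 - Ah) c0 Hu HA HX A1 (ltac:(rewrite expr2 s1; lra)) ltac:(lra).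
  by rewrite /quad expr2 => h; apply: lt0r_neq0; nra.
exists (Fv C u Ah Xh (-1)), (Fv C u Ah Xh 1).
split.
- have L := f_lim (C:=C) (u:=u) (Ah:=Ah) (Xh:=Xh) (tanh_lim_Ny al0) (hq (-1) ltac:(ring)).
  rewrite -(f_form (-1) c0 Hu HA HX) (Esig c0 Hu HA HX A1 (ltac:(ring) : (-1 : R) * -1 = 1)) in L.
  move: L; apply: cvg_trans; apply: near_eq_cvg; near=> t => /=.
  by rewrite Hgy (f_form _ c0 Hu HA HX).
- have L := f_lim (C:=C) (u:=u) (Ah:=Ah) (Xh:=Xh) (tanh_lim_y al0) (hq 1 ltac:(ring)).
  rewrite -(f_form 1 c0 Hu HA HX) (Esig c0 Hu HA HX A1 (ltac:(ring) : (1 : R) * 1 = 1)) in L.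
  move: L; apply: cvg_trans; apply: near_eq_cvg; near=> t => /=.
  by rewrite Hgy (f_form _ c0 Hu HA HX).
- apply/seteqP; split.
  + move=> z [Hz [s Ez]].
    have hcross := Fv_cross c0 Hu HA HX A1.
    move: Hz; rewrite Ez enorm_lt // (seg_norm (c:=c)) ?(Fv_norm c0 Hu HA HX A1) ?mulr1 ?mulrN1 ?opprK // => Hz.
    have s01 : 0 < s < 1.
      have hp : 0 < s * (1 - s).
        have : 0 < 2 * (s * (1 - s)) * (c ^+ 2 - dotv (Fv C u Ah Xh (-1)) (Fv C u Ah Xh 1)) by lra.
        by rewrite pmulr_lgt0 // pmulr_rgt0.
      by apply/andP; split; nra.
    have [x [x1 Ex]] := chord_inv c0 Hu HA HX A1 s01.
    have xb : -1 < x < 1 by apply/andP; split; nra.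
    exists (artanhR x / al) => //.
    rewrite Hgy divfK ?gt_eqF // tanh_artanh // (coadd_F c0 Hu HA HX A1) //.
  + move=> _ [t _ <-].
    rewrite Hgy (coadd_F c0 Hu HA HX A1) //; last exact: tanh_sq_lt1.
    by apply: chord_Fv => //; exact: tanh_sq_lt1.
- have EC : mob_add c C (0 *: u) = C by rewrite scale0r mob_add0r.
  have z1 : (0 : R) ^+ 2 < 1 by rewrite expr0n.
  split.
  + split; first exact: coadd_self.
    rewrite -[X in mob_coadd _ _ X]EC (coadd_F c0 Hu HA HX A1) //.
    exact: chord_Fv.
  + split; first exact: coadd_self.
    rewrite coadd_self // -[X in mob_scale _ _ X]ED (scale2_f c0 Hu HA HX A1) //.
    apply: chord_Fv => //.
    case/andP: y01 => h1 h2.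
    have hp : 0 < 1 + (na / c) ^+ 2 by nra.
    rewrite expr_div_n ltr_pdivrMr; last exact: exprn_gt0.
    by rewrite mul1r !expr2; nra.
  + rewrite -[X in mob_coadd _ _ X]ED (coadd_F c0 Hu HA HX A1) //.
    exact: chord_Fv.
Unshelve. all: end_near.
Qed.
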